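(* Let $n\ge1$, let $\eta=\begin{pmatrix}0&1\\1&0\end{pmatrix}^{\oplus n}\in\mathbb{F}_2^{2n\times2n}$, let $\omega=J-I\in\mathbb{F}_2^{2n\times 2n}$, and let $W\in\mathbb{F}_2^{2n\times2n}$ be the upper-triangular part, including the diagonal, of the complement $J-\eta$ (i.e. $W_{ik}=(J-\eta)_{ik}$ for $i\le k$ and $W_{ik}=0$ for $i>k$). Then $\omega=W^T\eta W$ and $W^2=I$.
   Context: All arithmetic is over $\mathbb{F}_2$. $J$ denotes the $2n\times 2n$ all-ones matrix and $I$ the identity; $\oplus$ denotes block-diagonal direct sum. *)

(* Defs.v *)
From mathcomp Require Import all_boot all_algebra.
Set Implicit Arguments. Unset Strict Implicit. Unset Printing Implicit Defensive.
Import GRing.Theory.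
Local Open Scope ring_scope.

(* Indices 0..2n-1 (0-based). Block k (0-based) occupies indices 2k, 2k+1. *)

(* eta = [[0,1],[1,0]]^{(+) n} : entry (i,k) is 1 iff i <> k and i, k lie in the same 2x2 block *)
Definition eta_mx (n : nat) : 'M['F_2]_(n.*2) :=
  \matrix_(i, k) (((i != k) && ((i : nat)./2 == (k : nat)./2))%:R).

Definition J_mx (n : nat) : 'M['F_2]_(n.*2) := const_mx 1.

Definition omega_mx (n : nat) : 'M['F_2]_(n.*2) := J_mx n - 1%:M.

Definition W_mx (n : nat) : 'M['F_2]_(n.*2) :=
  \matrix_(i, k) (if (i <= k)%N then (J_mx n - eta_mx n) i k else 0).

(* Main.v *)
Require Import Defs.
From mathcomp Require Import all_boot all_algebra.
From mathcomp Require Import zify.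
Import GRing.Theory.
Local Open Scope ring_scope.

Lemma F2E (x y : nat) : (x %% 2 = y %% 2)%N -> (x%:R : 'F_2) = y%:R.
Proof. move=> h. by rewrite -(Fp_nat_mod _ x) // h Fp_nat_mod. Qed.
Lemma sum_lt N m : (\sum_(j < N) ((j < m)%N : nat))%N = minn m N.
Proof. elim: N => [|N IH]; first by rewrite big_ord0; lia.
rewrite big_ord_recr /= IH; case: ltnP; lia. Qed.
Definition pp (a : nat) : nat := if odd a then a.-1 else a.+1.
Lemma sum_eq N c x : (\sum_(j < N) (((j:nat) == c) * x))%N = ((c < N) * x)%N.
Proof. elim: N => [|N IH]; first by rewrite big_ord0; lia.
rewrite big_ord_recr /= IH; case: eqP; lia. Qed.

Local Open Scope nat_scope.
Lemma ppE q (r : bool) : pp (r + q.*2) = (~~ r) + q.*2.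
Proof. rewrite /pp oddD odd_double addbF; case: r => /=; lia. Qed.
Lemma pw1 (a b i : nat) :
  ((a <= i) && (i != pp a)) * (b == pp a) %% 2 =
  (a == pp b) * ((pp b <= i) && (i != b)) %% 2.
Proof.
rewrite -(odd_double_half a) -(odd_double_half b) !ppE.
case: (odd a); case: (odd b) => /=; lia.
Qed.
Lemma fin1 (n i k : nat) : i < n.*2 -> k < n.*2 ->
  (i != k) %% 2 = (minn (minn i k).+1 n.*2 + (i < n.*2) * (i <= k)
   + (i.+1 < n.*2) * (~~ odd i && (i < k)) + (pp k < n.*2) * (odd k && (k <= i))) %% 2.
Proof.
move=> hi hk; move: hi hk.
rewrite -(odd_double_half i) -(odd_double_half k) !ppE oddD odd_double oddD odd_double !addbF.
case: (odd i); case: (odd k) => /= hi hk; lia.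
Qed.
Lemma pw2 (j i k : nat) :
  ((i <= j) && (j != pp i)) * ((j <= k) && (k != pp j)) %% 2 =
  ((j < k.+1) + (j < minn i k.+1) + (j == pp i) * ((i <= pp i) && (pp i <= k))
   + (j == pp k) * ((i <= pp k) && (pp k <= k))) %% 2.
Proof.
rewrite -(odd_double_half i) -(odd_double_half j) -(odd_double_half k) !ppE.
case: (odd i); case: (odd j); case: (odd k) => /=; lia.
Qed.
Lemma fin2 (n i k : nat) : i < n.*2 -> k < n.*2 ->
  (i == k) %% 2 = (minn k.+1 n.*2 + minn (minn i k.+1) n.*2
   + (pp i < n.*2) * ((i <= pp i) && (pp i <= k)) + (pp k < n.*2) * ((i <= pp k) && (pp k <= k))) %% 2.
Proof.
move=> hi hk; move: hi hk.
rewrite -(odd_double_half i) -(odd_double_half k) !ppE.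
case: (odd i); case: (odd k) => /= hi hk; lia.
Qed.
Lemma pw3 (n b i k : nat) : b < n.*2 ->
  (pp b < n.*2) * ((pp b <= i) && (i != b)) * ((b <= k) && (k != pp b)) %% 2
  = ((b < (minn i k).+1) + (b == i) * (i <= k) +
      (b == i.+1) * (~~ odd i && (i < k)) +
      (b == pp k) * (odd k && (k <= i))) %% 2.
Proof.
move=> hb; move: hb.
rewrite -(odd_double_half i) -(odd_double_half b) -(odd_double_half k) !ppE.
rewrite oddD odd_double oddD odd_double !addbF.
case: (odd i); case: (odd b); case: (odd k) => /= hb; lia.
Qed.
Local Open Scope ring_scope.

Lemma etaE n (i k : 'I_(n.*2)) : eta_mx n i k = ((k : nat) == pp i)%:R.
Proof.
rewrite mxE; congr ((nat_of_bool _)%:R); rewrite /pp.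
have -> : (i != k) = ((i:nat) != k) by [].
case Ha: (odd i); apply/idP/idP; lia.
Qed.

Lemma WE n (i k : 'I_(n.*2)) :
  W_mx n i k = (((i <= k)%N && ((k : nat) != pp i)) : nat)%:R.
Proof.
rewrite mxE; case: (i <= k)%N => //=.
rewrite mxE. have -> : (- eta_mx n) i k = - eta_mx n i k by rewrite mxE.
rewrite etaE /J_mx mxE.
by case: (_ == _); apply/eqP.
Qed.

Theorem mainTheorem3 (n : nat) (hn : (1 <= n)%N) :
  omega_mx n = (W_mx n)^T *m eta_mx n *m W_mx n /\
  W_mx n *m W_mx n = 1%:M.
Proof.
split.
- apply/matrixP => i k.
  rewrite /omega_mx /J_mx !mxE.
  have inner : forall b : 'I_(n.*2),
     (\sum_a (W_mx n)^T i a * eta_mx n a b) =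
     ((((pp b < n.*2)%N * ((pp b <= i)%N && ((i:nat) != b)))%N : nat)%:R : 'F_2).
    move=> b.
    rewrite -sum_eq natr_sum; apply: eq_bigr => a _.
    rewrite mxE WE etaE -natrM; apply: F2E; exact: pw1.
  under eq_bigr => b _ do rewrite mxE inner WE -natrM.
  pose h (b : nat) := ((b < (minn i k).+1)%N + ((b == i) * (i <= k)%N)
     + ((b == i.+1) * (~~ odd i && (i < k)%N))
     + ((b == pp k) * (odd k && (k <= i)%N)))%N.
  rewrite (eq_bigr (fun b : 'I_(n.*2) => (h b)%:R)); last first.
    move=> b _; apply: F2E; rewrite /h; exact: pw3 (ltn_ord b).
  rewrite -natr_sum /h !big_split /= sum_lt !sum_eq.
  have -> : (1 : 'F_2) - ((i == k) : nat)%:R = (((i:nat) != k) : nat)%:R.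
    have -> : (i == k) = ((i:nat) == k) by [].
    by case: (_ == _); apply/eqP.
  apply: F2E; exact: fin1.
- apply/matrixP => i k.
  rewrite !mxE.
  under eq_bigr => j _ do rewrite !WE -natrM.
  pose h (j : nat) := ((j < k.+1)%N + (j < minn i k.+1)%N
     + (j == pp i) * ((i <= pp i)%N && (pp i <= k)%N)
     + (j == pp k) * ((i <= pp k)%N && (pp k <= k)%N))%N.
  rewrite (eq_bigr (fun j : 'I_(n.*2) => (h j)%:R)); last first.
    move=> j _; apply: F2E; rewrite /h; exact: pw2.
  rewrite -natr_sum /h !big_split /= !sum_lt !sum_eq.
  have -> : (i == k) = ((i:nat) == k) by [].
  apply: F2E; symmetry; exact: fin2.
Qed.
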